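(* Assume (C1) and (C2). For any $u\in\mathcal{N}$, $$I(u)=\max_{t\ge0}I(tu).$$
   Context: Fix real numbers $p,q,r$ with $1<p<q$, $\frac p2$ a positive integer, and $r\ge1$, and functions $a,b,c:\mathbb{Z}\to(0,+\infty)$. Conditions: - (C1) There is $b_0>0$ with $b(n)\ge b_0$ for all $n$ and $b(n)\to+\infty$ as $|n|\to\infty$. - (C2) There is $c_0>0$ with $c(n)\le c_0$ for all $n$ and $\sum_n c(n)<+\infty$. Notation and spaces: - $\Delta u(n)=u(n+1)-u(n)$. - $E$ is the set of real sequences $u$ with $\|u\|:=\big(\sum_n[a(n)|\Delta u(n)|^p+b(n)|u(n)|^p]\big)^{1/p}<\infty$. - $\mathcal{D}=\{u\in E:\sum_n c(n)|u(n)|^q\ln|u(n)|^r<+\infty\}$, where terms with $u(n)=0$ are read as $0$. For $u,v\in\mathcal{D}$: - $I(u)=\frac1p\|u\|^p+\frac{r}{q^2}\sum_n c(n)|u(n)|^q-\frac1q\sum_n c(n)|u(n)|^q\ln|u(n)|^r$. - $\langle I'(u),v\rangle=\sum_n[a(n)|\Delta u(n)|^{p-2}\Delta u(n)\Delta v(n)+b(n)|u(n)|^{p-2}u(n)v(n)]-\sum_n c(n)|u(n)|^{q-2}u(n)v(n)\ln|u(n)|^r$. $\mathcal{N}=\{u\in\mathcal{D}:u\ne0,\ \langle I'(u),u\rangle=0\}$. *)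

(* Defs.v *)
From Stdlib Require Import Reals Lra ZArith.
From Coquelicot Require Import Coquelicot.
Open Scope R_scope.

Definition abspow (x s : R) : R :=
  if Req_EM_T x 0 then 0 else Rpower (Rabs x) s.

Definition summableZ (f : Z -> R) : Prop :=
  ex_series (fun n : nat => Rabs (f (Z.of_nat n))) /\
  ex_series (fun n : nat => Rabs (f (- Z.of_nat (S n))%Z)).

Definition sumZ (f : Z -> R) : R :=
  Series (fun n : nat => f (Z.of_nat n)) +
  Series (fun n : nat => f (- Z.of_nat (S n))%Z).

Definition Delta (u : Z -> R) (n : Z) : R := u (n + 1)%Z - u n.

Definition scaleZ (t : R) (u : Z -> R) : Z -> R := fun n => t * u n.

Section Functional.
Variables (p q r : R) (a b c : Z -> R).

Definition normE_integrand (u : Z -> R) (n : Z) : R :=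
  a n * abspow (Delta u n) p + b n * abspow (u n) p.

Definition inE (u : Z -> R) : Prop := summableZ (normE_integrand u).

Definition normE (u : Z -> R) : R := abspow (sumZ (normE_integrand u)) (1 / p).

Definition logterm (u : Z -> R) (n : Z) : R :=
  if Req_EM_T (u n) 0 then 0
  else c n * abspow (u n) q * ln (abspow (u n) r).

Definition inD (u : Z -> R) : Prop := inE u /\ summableZ (logterm u).

Definition Ifun (u : Z -> R) : R :=
  1 / p * abspow (normE u) p
  + r / (q * q) * sumZ (fun n => c n * abspow (u n) q)
  - 1 / q * sumZ (logterm u).

Definition Iprime (u v : Z -> R) : R :=
  sumZ (fun n => a n * abspow (Delta u n) (p - 2) * Delta u n * Delta v n
                 + b n * abspow (u n) (p - 2) * u n * v n)
  - sumZ (fun n => if Req_EM_T (u n) 0 then 0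
                   else c n * abspow (u n) (q - 2) * u n * v n * ln (abspow (u n) r)).

Definition inNehari (u : Z -> R) : Prop :=
  inD u /\ (exists n, u n <> 0) /\ Iprime u u = 0.

End Functional.

(* Main.v *)
Require Import Defs.
From Stdlib Require Import Reals Lra Lia ZArith.
From Coquelicot Require Import Coquelicot.
Open Scope R_scope.

Lemma exp_le' x y : x <= y -> exp x <= exp y.
Proof. intros [H|H]. left; apply exp_increasing; auto. subst; lra. Qed.

Lemma Series_nonneg (a : nat -> R) : (forall n, 0 <= a n) -> ex_series a -> 0 <= Series a.
Proof.
  intros H E.
  assert (Z0 : Series (fun _ => 0) = 0).
  { rewrite (Series_ext _ (fun n => 0 * a n)) by (intros; ring).
    rewrite Series_scal_l; ring. }
  rewrite <- Z0. apply Series_le; auto. intros; split; [lra|auto].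
Qed.

Lemma term_le_Series (n : nat) : forall (a : nat -> R), (forall n, 0 <= a n) -> ex_series a -> a n <= Series a.
Proof.
  induction n; intros a H E.
  - rewrite Series_incr_1 by auto.
    assert (0 <= Series (fun k => a (S k))).
    { apply Series_nonneg; auto. apply ex_series_incr_1 in E; auto. }
    lra.
  - rewrite Series_incr_1 by auto.
    pose proof (IHn (fun k => a (S k)) (fun k => H (S k)) (proj1 (ex_series_incr_1 a) E)).
    simpl in H0. specialize (H 0%nat). lra.
Qed.

Lemma exR_scal (c : R) (a : nat -> R) : ex_series a -> ex_series (fun n => c * a n).
Proof. intros H. apply (@ex_series_scal_l R_AbsRing R_NormedModule c a H). Qed.

Lemma exR_plus (a b : nat -> R) : ex_series a -> ex_series b -> ex_series (fun n => a n + b n).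
Proof. intros H1 H2. apply (@ex_series_plus R_AbsRing R_NormedModule a b H1 H2). Qed.

Lemma summ_comb (f g h : Z -> R) (al be : R) :
  0 <= al -> 0 <= be ->
  (forall n, Rabs (f n) <= al * Rabs (g n) + be * Rabs (h n)) ->
  summableZ g -> summableZ h -> summableZ f.
Proof.
  intros Ha Hb Hf [G1 G2] [H1 H2]. split.
  - apply (@ex_series_le R_AbsRing R_CompleteNormedModule _ (fun n => al * Rabs (g (Z.of_nat n)) + be * Rabs (h (Z.of_nat n)))).
    + intros n. change (norm (Rabs (f (Z.of_nat n)))) with (Rabs (Rabs (f (Z.of_nat n)))).
      rewrite Rabs_Rabsolu. apply Hf.
    + apply exR_plus; apply exR_scal; auto.
  - apply (@ex_series_le R_AbsRing R_CompleteNormedModule _ (fun n => al * Rabs (g (- Z.of_nat (S n))%Z) + be * Rabs (h (- Z.of_nat (S n))%Z))).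
    + intros n. change (norm (Rabs (f (- Z.of_nat (S n))%Z))) with (Rabs (Rabs (f (- Z.of_nat (S n))%Z))).
      rewrite Rabs_Rabsolu. apply Hf.
    + apply exR_plus; apply exR_scal; auto.
Qed.

Lemma sumZ_ext f g : (forall n, f n = g n) -> sumZ f = sumZ g.
Proof. intros H; unfold sumZ; f_equal; apply Series_ext; auto. Qed.

Lemma sumZ_lin (f g : Z -> R) al be : summableZ f -> summableZ g ->
  sumZ (fun n => al * f n + be * g n) = al * sumZ f + be * sumZ g.
Proof.
  intros [F1 F2] [G1 G2]. apply ex_series_Rabs in F1, F2, G1, G2. unfold sumZ.
  rewrite !Series_plus.
  - rewrite !Series_scal_l. ring.
  - apply (ex_series_scal_l al (fun n => f (- Z.of_nat (S n))%Z)); auto.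
  - apply (ex_series_scal_l be (fun n => g (- Z.of_nat (S n))%Z)); auto.
  - apply (exR_scal al (fun n => f (Z.of_nat n))); auto.
  - apply (exR_scal be (fun n => g (Z.of_nat n))); auto.
Qed.

Lemma sumZ_scal (f : Z -> R) al : summableZ f -> sumZ (fun n => al * f n) = al * sumZ f.
Proof.
  intros H. rewrite (sumZ_ext _ (fun n => al * f n + 0 * f n)) by (intros; ring).
  rewrite sumZ_lin; auto; ring.
Qed.

Lemma sumZ_nonneg f : (forall n, 0 <= f n) -> summableZ f -> 0 <= sumZ f.
Proof.
  intros H [F1 F2]. apply ex_series_Rabs in F1, F2. unfold sumZ.
  pose proof (Series_nonneg _ (fun n => H _) F1).
  pose proof (Series_nonneg _ (fun n => H _) F2). lra.
Qed.

Lemma sumZ_term f n : (forall n, 0 <= f n) -> summableZ f -> f n <= sumZ f.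
Proof.
  intros H [F1 F2]. apply ex_series_Rabs in F1, F2. unfold sumZ.
  pose proof (Series_nonneg _ (fun n => H _) F1).
  pose proof (Series_nonneg _ (fun n => H _) F2).
  destruct (Z_le_gt_dec 0 n) as [Hn|Hn].
  - pose proof (term_le_Series (Z.to_nat n) _ (fun n => H _) F1). simpl in H2.
    rewrite Z2Nat.id in H2 by auto. lra.
  - pose proof (term_le_Series (Z.to_nat (- n - 1)) _ (fun n => H _) F2). cbv beta in H2.
    rewrite Nat2Z.inj_succ, Z2Nat.id in H2 by lia.
    replace (- Z.succ (- n - 1))%Z with n in H2 by lia. lra.
Qed.

Lemma abspow_nonneg x s : 0 <= abspow x s.
Proof. unfold abspow. destruct (Req_EM_T x 0). lra. unfold Rpower. left; apply exp_pos. Qed.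

Lemma abspow_0 s : abspow 0 s = 0.
Proof. unfold abspow. destruct (Req_EM_T 0 0); [auto|lra]. Qed.

Lemma abspow_exp x s : x <> 0 -> abspow x s = exp (s * ln (Rabs x)).
Proof. intros H. unfold abspow. destruct (Req_EM_T x 0); [lra|reflexivity]. Qed.

Lemma abspow_mult x y s : abspow (x * y) s = abspow x s * abspow y s.
Proof.
  destruct (Req_EM_T x 0) as [->|Hx]. rewrite Rmult_0_l, !abspow_0; ring.
  destruct (Req_EM_T y 0) as [->|Hy]. rewrite Rmult_0_r, !abspow_0; ring.
  assert (x * y <> 0) by (apply Rmult_integral_contrapositive; auto).
  rewrite !abspow_exp by auto. rewrite Rabs_mult, ln_mult by (apply Rabs_pos_lt; auto).
  rewrite <- exp_plus. f_equal; ring.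
Qed.

Lemma abspow_inv S p : 0 <= S -> 0 < p -> abspow (abspow S (1 / p)) p = S.
Proof.
  intros HS Hp. destruct (Req_EM_T S 0) as [->|HS0]. rewrite !abspow_0; auto.
  rewrite (abspow_exp S) by auto. rewrite abspow_exp by (apply Rgt_not_eq, exp_pos).
  rewrite Rabs_pos_eq by (left; apply exp_pos). rewrite ln_exp.
  rewrite Rabs_pos_eq by auto. replace (p * (1 / p * ln S)) with (ln S) by (field; lra).
  apply exp_ln; lra.
Qed.

Lemma abspow_sq x s : abspow x (s - 2) * x * x = abspow x s.
Proof.
  destruct (Req_EM_T x 0) as [->|Hx]. rewrite !abspow_0; ring.
  rewrite !abspow_exp by auto.
  assert (E : x * x = Rabs x * Rabs x).
  { rewrite <- Rabs_mult. rewrite Rabs_pos_eq; [auto| apply Rle_0_sqr]. }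
  rewrite Rmult_assoc, E. assert (Hl : 0 < Rabs x) by (apply Rabs_pos_lt; auto).
  set (l := ln (Rabs x)). replace (Rabs x) with (exp l) by (apply exp_ln; auto).
  rewrite <- !exp_plus. f_equal; ring.
Qed.

Lemma key_ineq p q A C r s : 0 < p -> p < q -> 0 <= A -> 0 <= C -> 0 < r ->
  1 / p * (exp (p * s) * A) + r / (q * q) * (exp (q * s) * C)
  - 1 / q * (exp (q * s) * A + exp (q * s) * (r * s) * C)
  <= 1 / p * A + r / (q * q) * C - 1 / q * A.
Proof.
  intros Hp Hpq HA HC Hr.
  set (X := exp (p * s)). set (Y := exp (q * s)).
  assert (HX : 0 < X) by apply exp_pos. assert (HY : 0 < Y) by apply exp_pos.
  assert (E1 : Y >= X * (1 + (q - p) * s)).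
  { unfold X, Y. replace (q * s) with (p * s + (q - p) * s) by ring. rewrite exp_plus.
    pose proof (exp_ineq1_le ((q - p) * s)). pose proof (exp_pos (p * s)). nra. }
  assert (E2 : X * (1 - p * s) <= 1).
  { pose proof (exp_ineq1_le (- (p * s))).
    assert (X * exp (- (p * s)) = 1) by (unfold X; rewrite <- exp_plus; replace (p * s + - (p * s)) with 0 by ring; apply exp_0).
    nra. }
  assert (E3 : Y * (1 - q * s) <= 1).
  { pose proof (exp_ineq1_le (- (q * s))).
    assert (Y * exp (- (q * s)) = 1) by (unfold Y; rewrite <- exp_plus; replace (q * s + - (q * s)) with 0 by ring; apply exp_0).
    nra. }
  assert (B1 : q * X - p * Y - q + p <= 0).
  { assert (p * Y >= p * (X * (1 + (q - p) * s))) by nra. nra. }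
  assert (B1' : X / p - Y / q - 1 / p + 1 / q <= 0).
  { replace (X / p - Y / q - 1 / p + 1 / q) with ((q * X - p * Y - q + p) / (p * q)) by (field; lra).
    apply Rmult_le_0_r; [auto| left; apply Rinv_0_lt_compat; nra]. }
  assert (B2 : Y / q - s * Y - 1 / q <= 0).
  { replace (Y / q - s * Y - 1 / q) with ((Y * (1 - q * s) - 1) / q) by (field; lra).
    apply Rmult_le_0_r; [lra| left; apply Rinv_0_lt_compat; lra]. }
  assert (A * (X / p - Y / q - 1 / p + 1 / q) + (r * C / q) * (Y / q - s * Y - 1 / q) <= 0).
  { assert (0 <= r * C / q) by (apply Rmult_le_pos; [nra| left; apply Rinv_0_lt_compat; lra]). nra. }
  replace (1 / p * (X * A) + r / (q * q) * (Y * C) - 1 / q * (Y * A + Y * (r * s) * C))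
    with (1 / p * A + r / (q * q) * C - 1 / q * A + (A * (X / p - Y / q - 1 / p + 1 / q) + (r * C / q) * (Y / q - s * Y - 1 / q))) by (field; lra).
  lra.
Qed.

Theorem corollary2p5 (p q r : R) (a b c : Z -> R)
  (Hp : 1 < p) (Hpq : p < q) (Hpeven : exists k : nat, (1 <= k)%nat /\ p = 2 * INR k)
  (Hr : 1 <= r)
  (Ha : forall n, 0 < a n) (Hb : forall n, 0 < b n) (Hc : forall n, 0 < c n)
  (* (C1) *)
  (HC1 : (exists b0, 0 < b0 /\ forall n, b0 <= b n) /\
         (forall M, exists N : Z, forall n : Z, (N <= Z.abs n)%Z -> M <= b n))
  (* (C2) *)
  (HC2 : (exists c0, 0 < c0 /\ forall n, c n <= c0) /\ summableZ c) :
  forall u : Z -> R, inNehari p q r a b c u ->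
    forall t : R, 0 <= t ->
      inD p q r a b c (scaleZ t u) /\
      Ifun p q r a b c (scaleZ t u) <= Ifun p q r a b c u.
Proof.
  intros u [[HE HL] [_ HI]] t Ht.
  destruct HC1 as [[b0 [Hb0 Hbb]] _]. destruct HC2 as [[c0 [Hc0 Hcc]] _].
  unfold inE in HE.
  set (N := normE_integrand p a b u) in *.
  assert (Nnn : forall n, 0 <= N n).
  { intros n. unfold N, normE_integrand.
    pose proof (abspow_nonneg (Defs.Delta u n) p). pose proof (abspow_nonneg (u n) p).
    pose proof (Ha n). pose proof (Hb n). nra. }
  set (A := sumZ N).
  assert (HA : 0 <= A) by (apply sumZ_nonneg; auto).
  set (K := A / b0 + 1).
  assert (HK : 0 < K) by (unfold K; assert (0 <= A / b0) by (apply Rmult_le_pos; [auto | left; apply Rinv_0_lt_compat; auto]); lra).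
  assert (Hbd : forall n, b0 * abspow (u n) p <= N n).
  { intros n. unfold N, normE_integrand.
    pose proof (abspow_nonneg (Defs.Delta u n) p). pose proof (abspow_nonneg (u n) p).
    pose proof (Ha n). pose proof (Hbb n). nra. }
  assert (HuK : forall n, abspow (u n) p <= K).
  { intros n. pose proof (sumZ_term N n Nnn HE). fold A in H. pose proof (Hbd n).
    assert (abspow (u n) p <= A / b0).
    { apply Rmult_le_reg_l with b0; [lra|]. replace (b0 * (A / b0)) with A by (field; lra). lra. }
    unfold K; lra. }
  set (cq := fun n => c n * abspow (u n) q).
  assert (cqnn : forall n, 0 <= cq n).
  { intros n; unfold cq. pose proof (abspow_nonneg (u n) q). pose proof (Hc n). nra. }
  set (m := (q - p) / p).
  assert (Hm : 0 <= m) by (unfold m; apply Rmult_le_pos; [lra| left; apply Rinv_0_lt_compat; lra]).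
  set (EK := exp (m * ln K)).
  assert (HEK : 0 < EK) by apply exp_pos.
  assert (Hcq : summableZ cq).
  { apply (summ_comb cq N N (c0 * EK / b0) 0).
    - apply Rmult_le_pos; [nra| left; apply Rinv_0_lt_compat; auto].
    - lra.
    - intros n. rewrite (Rabs_pos_eq (cq n)) by auto. rewrite (Rabs_pos_eq (N n)) by auto.
      unfold cq. destruct (Req_EM_T (u n) 0) as [E0|E0].
      + rewrite E0, abspow_0. assert (0 <= c0 * EK / b0 * N n).
        { apply Rmult_le_pos; auto. apply Rmult_le_pos; [nra| left; apply Rinv_0_lt_compat; auto]. }
        nra.
      + pose proof (HuK n) as Hk. pose proof (Hbd n) as Hb'.
        rewrite !abspow_exp in * by auto.
        set (l := ln (Rabs (u n))) in *.
        assert (Hpl : p * l <= ln K).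
        { rewrite <- (ln_exp (p * l)). apply ln_le; auto. apply exp_pos. }
        assert (Hql : q * l <= p * l + m * ln K).
        { replace (q * l) with (p * l + m * (p * l)) by (unfold m; field; lra).
          assert (m * (p * l) <= m * ln K) by (apply Rmult_le_compat_l; auto). lra. }
        assert (Heq : exp (q * l) <= exp (p * l) * EK).
        { unfold EK; rewrite <- exp_plus; apply exp_le'; auto. }
        assert (Hpe : exp (p * l) <= N n / b0).
        { apply Rmult_le_reg_l with b0; [lra|]. replace (b0 * (N n / b0)) with (N n) by (field; lra). lra. }
        pose proof (exp_pos (q * l)). pose proof (exp_pos (p * l)). pose proof (Hc n). pose proof (Hcc n).
        assert (c n * exp (q * l) <= c0 * (exp (p * l) * EK)).
        { apply Rmult_le_compat; try lra. }
        assert (c0 * (exp (p * l) * EK) <= c0 * ((N n / b0) * EK)).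
        { apply Rmult_le_compat_l; [lra|]. apply Rmult_le_compat_r; lra. }
        replace (c0 * EK / b0 * N n + 0 * N n) with (c0 * ((N n / b0) * EK)) by (field; lra).
        lra.
    - auto.
    - auto. }
  set (v := scaleZ t u).
  set (Tp := abspow t p). set (Tq := abspow t q).
  assert (HTp : 0 <= Tp) by apply abspow_nonneg.
  assert (HTq : 0 <= Tq) by apply abspow_nonneg.
  assert (HNv : forall n, normE_integrand p a b v n = Tp * N n).
  { intros n. unfold v, N, normE_integrand, Defs.Delta, scaleZ.
    replace (t * u (n + 1)%Z - t * u n) with (t * (u (n + 1)%Z - u n)) by ring.
    rewrite !abspow_mult. unfold Tp; ring. }
  assert (Hcv : forall n, c n * abspow (v n) q = Tq * cq n).
  { intros n. unfold v, cq, scaleZ. rewrite abspow_mult. unfold Tq; ring. }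
  assert (Hlv : forall n, logterm q r c v n = Tq * logterm q r c u n + (Tq * (r * ln t)) * cq n).
  { intros n. unfold v, cq, logterm, scaleZ, Tq.
    destruct (Req_EM_T t 0) as [T0|T0].
    - subst t. rewrite Rmult_0_l. destruct (Req_EM_T 0 0); [|lra]. rewrite abspow_0. ring.
    - destruct (Req_EM_T (u n) 0) as [U0|U0].
      + rewrite U0, Rmult_0_r. destruct (Req_EM_T 0 0); [|lra]. rewrite abspow_0. ring.
      + destruct (Req_EM_T (t * u n) 0) as [TU|TU].
        * exfalso. apply Rmult_integral in TU. tauto.
        * rewrite !abspow_mult. rewrite ln_mult.
          -- rewrite (abspow_exp t r) by auto. rewrite ln_exp. rewrite Rabs_pos_eq by lra. ring.
          -- rewrite abspow_exp by auto. apply exp_pos.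
          -- rewrite abspow_exp by auto. apply exp_pos. }
  assert (HNvs : summableZ (normE_integrand p a b v)).
  { apply (summ_comb _ N N Tp 0); auto; try lra.
    intros n. rewrite HNv, Rabs_mult, (Rabs_pos_eq Tp) by auto. lra. }
  assert (HLvs : summableZ (logterm q r c v)).
  { apply (summ_comb _ (logterm q r c u) cq Tq (Rabs (Tq * (r * ln t)))); auto.
    - apply Rabs_pos.
    - intros n. rewrite Hlv. eapply Rle_trans; [apply Rabs_triang|].
      rewrite !Rabs_mult. rewrite (Rabs_pos_eq Tq) by auto. lra. }
  split.
  { split; auto. }
  unfold Iprime in HI.
  rewrite (sumZ_ext _ N) in HI.
  2:{ intros n. unfold N, normE_integrand.
      rewrite <- (abspow_sq (Defs.Delta u n) p), <- (abspow_sq (u n) p). ring. }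
  rewrite (sumZ_ext (fun n => if Req_EM_T (u n) 0 then _ else _) (logterm q r c u)) in HI.
  2:{ intros n. unfold logterm. destruct (Req_EM_T (u n) 0); [auto|].
      rewrite <- (abspow_sq (u n) q); ring. }
  fold A in HI.
  assert (HLA : sumZ (logterm q r c u) = A) by lra.
  unfold Ifun, normE. fold N A.
  rewrite (sumZ_ext _ _ HNv), sumZ_scal by auto. fold A.
  rewrite (sumZ_ext _ _ Hcv), sumZ_scal by auto.
  rewrite (sumZ_ext _ _ Hlv), sumZ_lin by auto.
  rewrite HLA.
  rewrite !abspow_inv by (auto; try lra; apply Rmult_le_pos; auto).
  change (sumZ (fun n => c n * abspow (u n) q)) with (sumZ cq).
  set (C := sumZ cq).
  assert (HC : 0 <= C) by (apply sumZ_nonneg; auto).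
  assert (Hqp : 1 / q < 1 / p).
  { unfold Rdiv; rewrite !Rmult_1_l; apply Rinv_lt_contravar; nra. }
  assert (Hrq : 0 <= r / (q * q)).
  { apply Rmult_le_pos; [lra| left; apply Rinv_0_lt_compat; nra]. }
  destruct (Req_EM_T t 0) as [T0|T0].
  - unfold Tp, Tq. rewrite T0, !abspow_0.
    assert (0 <= r / (q * q) * C) by (apply Rmult_le_pos; auto).
    assert (1 / q * A <= 1 / p * A) by (apply Rmult_le_compat_r; lra).
    lra.
  - unfold Tp, Tq. rewrite !abspow_exp by auto. rewrite Rabs_pos_eq by lra.
    pose proof (key_ineq p q A C r (ln t)). lra.
Qed.
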